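(* Let $\mathcal V$ be a congruence modular variety with difference term $d$, $A\in\mathcal V$ and $\alpha\in\operatorname{Con}A$ (arbitrary). Let $B=A(\alpha)/\Delta_{\alpha1}$ with binary operation $x+y:=d^B(x,0,y)$, where $0$ is the $\Delta_{\alpha1}$-class containing the diagonal. Then there exist maps $T_f:(A/\alpha)^{\operatorname{ar}f}\to B$ ($f\in\tau$) such that \[A/[\alpha,1_A]\cong B\otimes^{T}A/\alpha.\]
   Context: All algebras are in the sense of universal algebra, with signature $\tau$. For $\alpha,\beta\in\operatorname{Con}A$, $[\alpha,\beta]$ is the term-condition (TC) commutator; $1_A$ is the total relation. $A(\alpha)=\{(x,y)\in A\times A:(x,y)\in\alpha\}$ is $\alpha$ viewed as a subalgebra of $A\times A$; $\Delta_{\alpha\beta}$ is the congruence of $A(\alpha)$ generated by $\{((u,u),(v,v)):(u,v)\in\beta\}$. A difference term for $\mathcal V$ is a ternary term $d$ such that for every $A\in\mathcal V$, $\theta\in\operatorname{Con}A$, $(a,b)\in\theta$: $d(a,a,b)=b$ and $(d(a,b,b),a)\in[\theta,\theta]$ (every congruence modular variety has one). Given algebras $B,Q$ in the same signature $\tau$, a binary operation $+$ on $B$, and maps $T_f:Q^{\operatorname{ar}f}\to B$ ($f\in\tau$), the algebra $B\otimes^{T}Q$ has universe $B\times Q$ and operations $F_f((b_1,q_1),\dots,(b_n,q_n))=\big(f^B(b_1,\dots,b_n)+T_f(q_1,\dots,q_n),\,f^Q(q_1,\dots,q_n)\big)$. *)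

(* Defs.v *)
From Stdlib Require Import Relation_Definitions Relation_Operators IndefiniteDescription.
From mathcomp Require Import all_boot.
Set Implicit Arguments. Unset Strict Implicit. Unset Printing Implicit Defensive.

Record signature := Signature { sym : Type; ar : sym -> nat }.

Record algebra (S : signature) := Algebra {
  carrier :> Type;
  op : forall f : sym S, ('I_(ar f) -> carrier) -> carrier }.
Arguments Algebra {S} carrier op.
Arguments op {S} a f _ : rename.

Section UA.
Variable S : signature.

Definition compatible (A : algebra S) (R : A -> A -> Prop) :=
  forall f (a b : 'I_(ar f) -> A), (forall i, R (a i) (b i)) -> R (op A f a) (op A f b).

Definition is_cong (A : algebra S) (R : A -> A -> Prop) :=
  equivalence A R /\ compatible R.

Definition rel_sub (T : Type) (R1 R2 : T -> T -> Prop) := forall x y, R1 x y -> R2 x y.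
Definition rel_eq (T : Type) (R1 R2 : T -> T -> Prop) := rel_sub R1 R2 /\ rel_sub R2 R1.
Definition cmeet (T : Type) (R1 R2 : T -> T -> Prop) := fun x y => R1 x y /\ R2 x y.
Definition cjoin (T : Type) (R1 R2 : T -> T -> Prop) :=
  clos_trans T (fun x y => R1 x y \/ R2 x y).
Definition total_rel (T : Type) : T -> T -> Prop := fun _ _ => True.

Definition modular_cong (A : algebra S) :=
  forall a b c : A -> A -> Prop, is_cong a -> is_cong b -> is_cong c ->
    rel_sub a c -> rel_eq (cmeet (cjoin a b) c) (cjoin a (cmeet b c)).

Definition cg (A : algebra S) (R : A -> A -> Prop) : A -> A -> Prop :=
  fun x y => forall th, is_cong th -> rel_sub R th -> th x y.

Inductive term : Type :=
| Var of nat
| App (f : sym S) of ('I_(ar f) -> term).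

Fixpoint eval (A : algebra S) (v : nat -> A) (t : term) : A :=
  match t with
  | Var n => v n
  | App f ts => op A f (fun i => eval v (ts i))
  end.

Fixpoint vars_lt (n : nat) (t : term) : Prop :=
  match t with
  | Var i => i < n
  | App f ts => forall i, vars_lt n (ts i)
  end.

Definition app3 (A : algebra S) (t : term) (x y z : A) : A :=
  eval (fun i => match i with 0 => x | 1 => y | _ => z end) t.

(* A satisfies all identities s = t with E s t; a variety is Mod(E). *)
Definition satisfies (A : algebra S) (E : term -> term -> Prop) :=
  forall s t, E s t -> forall v : nat -> A, eval v s = eval v t.

Definition congruence_modular (E : term -> term -> Prop) :=
  forall A : algebra S, satisfies A E -> modular_cong A.

Definition mix (A : Type) (P : nat -> bool) (u w : nat -> A) : nat -> A :=
  fun i => if P i then u i else w i.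

(* C(a,b;d): for every term t(xbar,ybar) (xbar = variables with P),
   xbar-tuples u a v, ybar-tuples w b z:
   t(u,w) d t(u,z) -> t(v,w) d t(v,z). *)
Definition centralizes (A : algebra S) (a b d : A -> A -> Prop) :=
  forall (t : term) (P : nat -> bool) (u v w z : nat -> A),
    (forall i, a (u i) (v i)) -> (forall i, b (w i) (z i)) ->
    d (eval (mix P u w) t) (eval (mix P u z) t) ->
    d (eval (mix P v w) t) (eval (mix P v z) t).

Definition commutator (A : algebra S) (a b : A -> A -> Prop) : A -> A -> Prop :=
  fun x y => forall d, is_cong d -> centralizes a b d -> d x y.

Definition is_difference_term (E : term -> term -> Prop) (d : term) :=
  vars_lt 3 d /\
  forall A : algebra S, satisfies A E ->
  forall th : A -> A -> Prop, is_cong th ->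
  forall a b : A, th a b ->
    app3 d a a b = b /\ commutator th th (app3 d a b b) a.

Definition pairs (A : algebra S) (al : A -> A -> Prop) := {p : A * A | al p.1 p.2}.

Definition pairs_op (A : algebra S) (al : A -> A -> Prop) (H : is_cong al)
  (f : sym S) (ps : 'I_(ar f) -> pairs al) : pairs al :=
  exist (fun p : A * A => al p.1 p.2)
    (op A f (fun i => (proj1_sig (ps i)).1), op A f (fun i => (proj1_sig (ps i)).2))
    (proj2 H f _ _ (fun i => proj2_sig (ps i))).

Definition sub_alg (A : algebra S) (al : A -> A -> Prop) (H : is_cong al) : algebra S :=
  Algebra (pairs al) (pairs_op H).

Definition Delta (A : algebra S) (al : A -> A -> Prop) (H : is_cong al)
  (be : A -> A -> Prop) : sub_alg H -> sub_alg H -> Prop :=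
  cg (fun p q : sub_alg H => exists u v, be u v /\
        proj1_sig p = (u, u) /\ proj1_sig q = (v, v)).

Definition qcarrier (A : Type) (th : A -> A -> Prop) := {X : A -> Prop | exists a, X = th a}.

Definition cls (A : Type) (th : A -> A -> Prop) (a : A) : qcarrier th :=
  exist (fun X => exists a, X = th a) (th a) (ex_intro _ a erefl).

Definition repr (A : Type) (th : A -> A -> Prop) (X : qcarrier th) : A :=
  proj1_sig (constructive_indefinite_description _ (proj2_sig X)).

Definition quot_op (A : algebra S) (th : A -> A -> Prop) (f : sym S)
  (xs : 'I_(ar f) -> qcarrier th) : qcarrier th :=
  cls th (op A f (fun i => repr (xs i))).

Definition quot (A : algebra S) (th : A -> A -> Prop) : algebra S :=
  Algebra (qcarrier th) (@quot_op A th).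

Definition Balg (A : algebra S) (al : A -> A -> Prop) (H : is_cong al) : algebra S :=
  @quot (sub_alg H) (@Delta A al H (@total_rel A)).

Definition diag_elt (A : algebra S) (al : A -> A -> Prop) (H : is_cong al) (a : A)
  : sub_alg H :=
  exist (fun p : A * A => al p.1 p.2) (a, a) (Relation_Definitions.equiv_refl _ _ (proj1 H) a).

(* 0 := the Delta_{al,1}-class containing the diagonal; we name it as the
   class of (a,a) for a = first coordinate of a representative of x, so that
   it is defined whenever B is inhabited (all diagonal pairs are in one class). *)
Definition zeroB (A : algebra S) (al : A -> A -> Prop) (H : is_cong al)
  (x : Balg H) : Balg H :=
  cls _ (diag_elt H (proj1_sig (repr x)).1).

Definition plusB (A : algebra S) (al : A -> A -> Prop) (H : is_cong al)
  (d : term) (x y : Balg H) : Balg H :=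
  @app3 (Balg H) d x (zeroB x) y.

Definition otimes_op (B Q : algebra S) (plus : B -> B -> B)
  (T : forall f : sym S, ('I_(ar f) -> Q) -> B)
  (f : sym S) (xs : 'I_(ar f) -> (B * Q)%type) : (B * Q)%type :=
  (plus (op B f (fun i => (xs i).1)) (T f (fun i => (xs i).2)),
   op Q f (fun i => (xs i).2)).

Definition otimes (B Q : algebra S) (plus : B -> B -> B)
  (T : forall f : sym S, ('I_(ar f) -> Q) -> B) : algebra S :=
  Algebra (B * Q)%type (otimes_op plus T).

Definition is_hom (A B : algebra S) (h : A -> B) :=
  forall f (xs : 'I_(ar f) -> A), h (op A f xs) = op B f (fun i => h (xs i)).

Definition isomorphic (A B : algebra S) :=
  exists h : A -> B, is_hom h /\ bijective h.

End UA.

(* Main.v *)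
Require Import Defs.
From mathcomp Require Import all_boot zify.
From Stdlib Require Import IndefiniteDescription Relation_Operators ProofIrrelevance FunctionalExtensionality PropExtensionality.
Set Implicit Arguments. Unset Strict Implicit.

Lemma sig_ext (T : Type) (P : T -> Prop) (p q : {x | P x}) :
  proj1_sig p = proj1_sig q -> p = q.
Proof. destruct p as [x hx], q as [y hy]; simpl; intros ->; f_equal; apply proof_irrelevance. Qed.

Section Gen.
Variable S : signature.

Lemma eval_cong (M : algebra S) (r : M -> M -> Prop) : is_cong r ->
  forall v v', (forall n, r (v n) (v' n)) -> forall t, r (eval v t) (eval v' t).
Proof. intros [_ Hc] v v' Hv t; elim: t => [n|f ts IH] /=; auto. Qed.

Lemma app3_cong (M : algebra S) (r : M -> M -> Prop) t : is_cong r ->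
  forall a a' b b' c c', r a a' -> r b b' -> r c c' -> r (app3 t a b c) (app3 t a' b' c').
Proof. intros Hr a a' b b' c c' h1 h2 h3; unfold app3; apply eval_cong; auto; intros [|[|n]]; auto. Qed.

Lemma eval_sub (M : algebra S) (r : M -> M -> Prop) (H : is_cong r) v t :
  proj1_sig (eval (A:=sub_alg H) v t) =
  (eval (fun n => (proj1_sig (v n)).1) t, eval (fun n => (proj1_sig (v n)).2) t).
Proof.
  elim: t => [n|f ts IH] /=; [by case: (proj1_sig (v n))|].
  f_equal; f_equal; apply functional_extensionality; intro i; rewrite IH; auto.
Qed.

Lemma app3_sub (M : algebra S) (r : M -> M -> Prop) (H : is_cong r) t (a b c : sub_alg H) :
  proj1_sig (app3 t a b c) =
  (app3 t (proj1_sig a).1 (proj1_sig b).1 (proj1_sig c).1,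
   app3 t (proj1_sig a).2 (proj1_sig b).2 (proj1_sig c).2).
Proof.
  unfold app3; rewrite eval_sub; f_equal; f_equal; apply functional_extensionality;
  intros [|[|n]]; auto.
Qed.

Lemma sat_sub E (M : algebra S) (r : M -> M -> Prop) (H : is_cong r) :
  satisfies M E -> satisfies (sub_alg H) E.
Proof.
  intros HM s t Est v; apply sig_ext; rewrite !eval_sub.
  rewrite (HM s t Est (fun n => (proj1_sig (v n)).1)) (HM s t Est (fun n => (proj1_sig (v n)).2)).
  auto.
Qed.

Lemma total_cong (M : algebra S) : is_cong (@total_rel M).
Proof. split; [split|]; red; auto; intros; exact I. Qed.

Lemma cg_cong (M : algebra S) (R : M -> M -> Prop) : is_cong (cg R).
Proof.
  split; [split|].
  - intros x th Hth _; apply (proj1 Hth).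
  - intros x y z h1 h2 th Hth HR; apply (Relation_Definitions.equiv_trans _ _ (proj1 Hth) x y z); [apply h1|apply h2]; auto.
  - intros x y h1 th Hth HR; apply (Relation_Definitions.equiv_sym _ _ (proj1 Hth)); apply h1; auto.
  - intros f a b Hab th Hth HR; apply (proj2 Hth); intro i; apply Hab; auto.
Qed.

Lemma cg_gen (M : algebra S) (R : M -> M -> Prop) x y : R x y -> cg R x y.
Proof. intros h th _ HR; auto. Qed.

Lemma comm_cong (M : algebra S) (a b : M -> M -> Prop) : is_cong (commutator a b).
Proof.
  split; [split|].
  - intros x r Hr _; apply (proj1 Hr).
  - intros x y z h1 h2 r Hr HC; apply (Relation_Definitions.equiv_trans _ _ (proj1 Hr) x y z); [apply h1|apply h2]; auto.
  - intros x y h1 r Hr HC; apply (Relation_Definitions.equiv_sym _ _ (proj1 Hr)); apply h1; auto.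
  - intros f x y Hxy r Hr HC; apply (proj2 Hr); intro i; apply Hxy; auto.
Qed.

Lemma comm_centr (M : algebra S) (a b : M -> M -> Prop) : centralizes a b (commutator a b).
Proof.
  intros t P u v w z Hu Hw H r Hr HC; exact (HC t P u v w z Hu Hw (H r Hr HC)).
Qed.

Lemma comm_mono (M : algebra S) (a b b' : M -> M -> Prop) :
  rel_sub b b' -> rel_sub (commutator a b) (commutator a b').
Proof.
  intros Hb x y Hxy r Hr HC; apply Hxy; auto.
  intros t P u v w z Hu Hw; apply HC; auto.
Qed.

Lemma comm_least (M : algebra S) (a b r : M -> M -> Prop) :
  is_cong r -> centralizes a b r -> rel_sub (commutator a b) r.
Proof. intros Hr HC x y H; apply H; auto. Qed.

Lemma shift E (HCM : congruence_modular E) (M : algebra S) (HM : satisfies M E)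
  (a b c : M -> M -> Prop) : is_cong a -> is_cong b -> is_cong c ->
  rel_sub (cmeet a b) c ->
  forall x u y v, a x u -> a y v -> b x y -> b u v -> c x u -> c y v.
Proof.
  intros Ha Hb Hc Habc x u y v axu ayv bxy buv cxu.
  destruct Ha as [[a_r a_t a_s] Hac]. destruct Hc as [[c_r c_t c_s] Hcc].
  destruct Hb as [[b_r b_t b_s] Hbc].
  pose (Hb' := (conj (Relation_Definitions.Build_equivalence _ _ b_r b_t b_s) Hbc : is_cong b)).
  pose (D := sub_alg Hb').
  pose (Dp := cg (fun P Q : D => exists p q, cmeet a c p q /\ proj1_sig P = (p,p) /\ proj1_sig Q = (q,q))).
  pose (ah := fun P Q : D => a (proj1_sig P).1 (proj1_sig Q).1 /\ a (proj1_sig P).2 (proj1_sig Q).2).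
  pose (e0 := fun P Q : D => (proj1_sig P).1 = (proj1_sig Q).1).
  pose (c1 := fun P Q : D => c (proj1_sig P).2 (proj1_sig Q).2).
  have Hah : is_cong ah.
  { split; [split|].
    - intros P; split; apply a_r.
    - intros P Q R [h1 h2] [h3 h4]; split; eauto.
    - intros P Q [h1 h2]; split; eauto.
    - intros f P Q HPQ; split; simpl; apply Hac; intro i; apply HPQ. }
  have He0 : is_cong e0.
  { split; [split|].
    - intros P; reflexivity.
    - intros P Q R h1 h2; red; congruence.
    - intros P Q h1; red; congruence.
    - intros f P Q HPQ; red; simpl; f_equal; apply functional_extensionality; intro i; apply HPQ. }
  have Hc1 : is_cong c1.
  { split; [split|].
    - intros P; apply c_r.
    - intros P Q R h1 h2; red; eauto.
    - intros P Q h1; red; eauto.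
    - intros f P Q HPQ; red; simpl; apply Hcc; intro i; apply HPQ. }
  have HDp : is_cong Dp by apply cg_cong.
  have Dah : rel_sub Dp ah.
  { intros P Q H; apply H; auto. intros P' Q' [p [q [[h1 h2] [e1 e2]]]].
    red; rewrite e1 e2; simpl; auto. }
  have Dc1 : rel_sub Dp c1.
  { intros P Q H; apply H; auto. intros P' Q' [p [q [[h1 h2] [e1 e2]]]].
    red; rewrite e1 e2; simpl; auto. }
  pose (p := exist (fun q : M * M => b q.1 q.2) (x, y) bxy : D).
  pose (q := exist (fun q : M * M => b q.1 q.2) (u, v) buv : D).
  pose (xx := exist (fun q : M * M => b q.1 q.2) (x, x) (b_r x) : D).
  pose (uu := exist (fun q : M * M => b q.1 q.2) (u, u) (b_r u) : D).
  have J : cjoin Dp e0 p q.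
  { apply t_trans with xx; [apply t_step; right; reflexivity|].
    apply t_trans with uu; [apply t_step; left|apply t_step; right; reflexivity].
    apply cg_gen. exists x, u; split; [split|]; auto. }
  have Mo := HCM _ (sat_sub (H:=Hb') HM) Dp e0 ah HDp He0 Hah Dah.
  destruct (Mo) as [Mo1 _].
  have K := Mo1 p q (conj J (conj axu ayv)).
  have : c1 p q.
  { clear -K Dc1 Hc1 Habc b_s b_t.
    induction K as [P Q [h|[h1 [h2 h3]]]| P Q R _ IH1 _ IH2].
    - apply Dc1; auto.
    - red. apply Habc. split; auto. red in h1. destruct P as [[p1 p2] hp], Q as [[q1 q2] hq];
      simpl in *; subst; eauto.
    - eapply (Relation_Definitions.equiv_trans _ _ (proj1 Hc1)); eauto. }
  auto.
Qed.


Fixpoint subst (sg : nat -> term S) (t : term S) : term S :=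
  match t with Var n => sg n | @App _ f ts => @App S f (fun i => subst sg (ts i)) end.

Lemma eval_subst (M : algebra S) (v : nat -> M) sg t :
  eval v (subst sg t) = eval (fun n => eval v (sg n)) t.
Proof.
  elim: t => [n|f ts IH] //=. f_equal; apply functional_extensionality => i; apply IH.
Qed.

Definition dsub (d a b c : term S) :=
  subst (fun n => match n with 0 => a | 1 => b | _ => c end) d.

Lemma eval_dsub (M : algebra S) (v : nat -> M) d a b c :
  eval v (dsub d a b c) = app3 d (eval v a) (eval v b) (eval v c).
Proof.
  rewrite /dsub eval_subst /app3; f_equal; apply functional_extensionality; by case=> [|[|n]].
Qed.

Lemma repr_spec (T : Type) (r : T -> T -> Prop) (X : qcarrier r) : proj1_sig X = r (Defs.repr X).
Proof. rewrite /Defs.repr; by case: (constructive_indefinite_description _ _). Qed.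

Lemma cls_repr (T : Type) (r : T -> T -> Prop) (X : qcarrier r) : cls r (Defs.repr X) = X.
Proof. apply sig_ext; by rewrite /= -repr_spec. Qed.

Lemma cls_eq (T : Type) (r : T -> T -> Prop) : Relation_Definitions.equivalence T r ->
  forall a b, r a b -> cls r a = cls r b.
Proof.
  intros [hr ht hs] a b h; apply sig_ext => /=.
  apply functional_extensionality => x; apply propositional_extensionality; split; eauto.
Qed.

Lemma cls_inj (T : Type) (r : T -> T -> Prop) : Relation_Definitions.reflexive T r ->
  forall a b, cls r a = cls r b -> r a b.
Proof. intros hr a b h. have: proj1_sig (cls r a) = proj1_sig (cls r b) by rewrite h.
  move=> /= ->; apply hr. Qed.

Lemma repr_cls (T : Type) (r : T -> T -> Prop) : Relation_Definitions.equivalence T r ->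
  forall a, r (Defs.repr (cls r a)) a.
Proof.
  intros hq a. apply (Relation_Definitions.equiv_sym _ _ hq).
  apply cls_inj; [apply hq|]. by rewrite cls_repr.
Qed.

Lemma eval_quot (M : algebra S) (r : M -> M -> Prop) (H : is_cong r) (v : nat -> M) t :
  eval (A:=quot r) (fun n => cls r (v n)) t = cls r (eval v t).
Proof.
  elim: t => [n|f ts IH] //=. rewrite /quot_op.
  apply cls_eq; [apply H|]. apply (proj2 H) => i. rewrite IH. apply repr_cls, H.
Qed.

Lemma app3_quot (M : algebra S) (r : M -> M -> Prop) (H : is_cong r) t (a b c : M) :
  app3 (A:=quot r) t (cls r a) (cls r b) (cls r c) = cls r (app3 t a b c).
Proof.
  rewrite /app3 -eval_quot //; f_equal; apply functional_extensionality; by case=> [|[|n]].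
Qed.

Definition ext (T : Type) k (vec : 'I_k -> T) (dflt : T) (n : nat) : T :=
  match (insub n : option 'I_k) with Some i => vec i | None => dflt end.

Lemma ext_val (T : Type) k (vec : 'I_k -> T) dflt (i : 'I_k) : ext vec dflt i = vec i.
Proof. by rewrite /ext valK. Qed.

End Gen.

Section Main.
Variables (S : signature) (E : term S -> term S -> Prop) (d : term S)
  (HCM : congruence_modular E) (Hd : is_difference_term E d)
  (A : algebra S) (HA : satisfies A E)
  (al : A -> A -> Prop) (Hal : is_cong al).

Local Notation th := (commutator al (@total_rel A)).
Local Notation C := (sub_alg Hal).
Local Notation Dl := (@Delta S A al Hal (@total_rel A)).

Lemma al_refl x : al x x. Proof. exact (Relation_Definitions.equiv_refl _ _ (proj1 Hal) x). Qed.
Lemma al_sym x y : al x y -> al y x. Proof. exact (Relation_Definitions.equiv_sym _ _ (proj1 Hal) x y). Qed.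
Lemma al_trans x y z : al x y -> al y z -> al x z.
Proof. intros; apply (Relation_Definitions.equiv_trans _ _ (proj1 Hal) x y z); auto. Qed.

Lemma Hth : is_cong th. Proof. apply comm_cong. Qed.
Lemma th_refl x : th x x. Proof. exact (Relation_Definitions.equiv_refl _ _ (proj1 Hth) x). Qed.
Lemma th_sym x y : th x y -> th y x. Proof. exact (Relation_Definitions.equiv_sym _ _ (proj1 Hth) x y). Qed.
Lemma th_trans x y z : th x y -> th y z -> th x z.
Proof. intros; apply (Relation_Definitions.equiv_trans _ _ (proj1 Hth) x y z); auto. Qed.

Lemma HDl : is_cong Dl. Proof. apply: cg_cong. Qed.
Lemma Dl_refl x : Dl x x. Proof. exact (Relation_Definitions.equiv_refl _ _ (proj1 HDl) x). Qed.
Lemma Dl_sym x y : Dl x y -> Dl y x. Proof. exact (Relation_Definitions.equiv_sym _ _ (proj1 HDl) x y). Qed.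
Lemma Dl_trans x y z : Dl x y -> Dl y z -> Dl x z.
Proof. intros; apply (Relation_Definitions.equiv_trans _ _ (proj1 HDl) x y z); auto. Qed.

Lemma dxxy (M : algebra S) (HM : satisfies M E) (a b : M) : app3 d a a b = b.
Proof. exact (proj1 (proj2 Hd M HM _ (total_cong M) a b I)). Qed.

Lemma dxyy_th a b : al a b -> th (app3 d a b b) a.
Proof.
  intro h. apply (comm_mono (b:=al)); [by []|].
  exact (proj2 (proj2 Hd A HA al Hal a b h)).
Qed.

Lemma thC : centralizes al (@total_rel A) th. Proof. apply comm_centr. Qed.

Definition mk (x y : A) (h : al x y) : C := exist (fun p : A * A => al p.1 p.2) (x, y) h.

Definition DD (p q : A * A) : Prop :=
  exists hp hq, Dl (exist (fun p : A * A => al p.1 p.2) p hp) (exist (fun p : A * A => al p.1 p.2) q hq).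

Lemma DD_all p q : DD p q -> forall hp hq,
  Dl (exist (fun p : A * A => al p.1 p.2) p hp) (exist (fun p : A * A => al p.1 p.2) q hq).
Proof.
  move=> [hp [hq H]] hp' hq'. by rewrite (proof_irrelevance _ hp' hp) (proof_irrelevance _ hq' hq).
Qed.

Lemma DD_intro (P Q : C) : Dl P Q -> DD (proj1_sig P) (proj1_sig Q).
Proof. case: P => p hp; case: Q => q hq /= H; by exists hp, hq. Qed.

Lemma DD_al1 p q : DD p q -> al p.1 p.2. Proof. by case=> [hp _]. Qed.
Lemma DD_al2 p q : DD p q -> al q.1 q.2. Proof. by case=> [_ [hq _]]. Qed.

Lemma DD_sym p q : DD p q -> DD q p.
Proof. move=> [hp [hq H]]; exists hq, hp; by apply Dl_sym. Qed.

Lemma DD_trans p q r : DD p q -> DD q r -> DD p r.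
Proof.
  move=> [hp [hq H1]] H2. have [_ [hr _]] := H2.
  exists hp, hr. apply Dl_trans with (exist _ q hq); auto. by apply DD_all.
Qed.

Lemma DD_diag u v : DD (u, u) (v, v).
Proof.
  exists (al_refl u), (al_refl v). apply cg_gen. by exists u, v.
Qed.

Lemma Dl_diag u v : Dl (diag_elt Hal u) (diag_elt Hal v).
Proof. apply cg_gen. by exists u, v. Qed.

Definition swp (P : C) : C :=
  exist (fun p : A * A => al p.1 p.2) ((proj1_sig P).2, (proj1_sig P).1) (al_sym (proj2_sig P)).

Lemma DD_swap a b c e : DD (a, b) (c, e) -> DD (b, a) (e, c).
Proof.
  move=> [hp [hq H]].
  pose sw := fun P Q : C => Dl (swp P) (swp Q).
  have Hsw : is_cong sw.
  { split; [split|].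
    - move=> P; apply Dl_refl.
    - move=> P Q R h1 h2; exact: Dl_trans h1 h2.
    - move=> P Q h1; exact: Dl_sym h1.
    - move=> f P Q HPQ. rewrite /sw.
      have E1 : forall R : 'I_(ar f) -> C, swp (op C f R) = op C f (fun i => swp (R i)).
      { move=> R; by apply sig_ext. }
      rewrite !E1. apply (proj2 HDl) => i; apply HPQ. }
  have : sw (exist _ (a, b) hp) (exist _ (c, e) hq).
  { apply H; auto. move=> P Q [u [v [_ [e1 e2]]]]. rewrite /sw.
    have -> : swp P = diag_elt Hal u by apply sig_ext; rewrite /= e1.
    have -> : swp Q = diag_elt Hal v by apply sig_ext; rewrite /= e2.
    apply Dl_diag. }
  rewrite /sw /swp /= => H'. eexists; eexists; exact H'.
Qed.

Lemma HC : satisfies C E. Proof. by apply sat_sub. Qed.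

Lemma BC e a b c : DD (e, a) (e, b) -> al c a -> DD (c, a) (c, b).
Proof.
  move=> H hca. have hea := DD_al1 H. have heb := DD_al2 H.
  have hcb : al c b := al_trans hca (al_trans (al_sym hea) heb).
  pose e0 := fun P Q : C => (proj1_sig P).1 = (proj1_sig Q).1.
  pose e1 := fun P Q : C => (proj1_sig P).2 = (proj1_sig Q).2.
  have He0 : is_cong e0.
  { split; [split|].
    - by move=> P.
    - move=> P Q R h1 h2; rewrite /e0 h1 h2 //.
    - move=> P Q h1; rewrite /e0 h1 //.
    - move=> f P Q HPQ; rewrite /e0 /=; f_equal; apply functional_extensionality => i; apply HPQ. }
  have He1 : is_cong e1.
  { split; [split|].
    - by move=> P.
    - move=> P Q R h1 h2; rewrite /e1 h1 h2 //.
    - move=> P Q h1; rewrite /e1 h1 //.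
    - move=> f P Q HPQ; rewrite /e1 /=; f_equal; apply functional_extensionality => i; apply HPQ. }
  have Hm : rel_sub (cmeet e0 e1) Dl.
  { move=> P Q [h1 h2]. have -> : P = Q.
    { apply sig_ext. move: h1 h2; rewrite /e0 /e1. case: (proj1_sig P) => ? ?; case: (proj1_sig Q) => ? ? /= -> -> //. }
    apply Dl_refl. }
  exists hca, hcb.
  apply (shift HCM HC He0 He1 HDl Hm (x:=exist _ (e,a) hea) (u:=exist _ (e,b) heb)); try by [].
  by apply DD_all.
Qed.

Definition kap a b := al a b /\ forall c, al c a -> DD (c, a) (c, b).

Lemma kap_of e a b : DD (e, a) (e, b) -> kap a b.
Proof.
  move=> H. split.
  - exact: al_trans (al_sym (DD_al1 H)) (DD_al2 H).
  - move=> c hc; exact: BC H hc.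
Qed.

Lemma kap_cong : is_cong kap.
Proof.
  split; [split|].
  - move=> a; split; [apply al_refl|]. move=> c hc; exists hc, hc; apply Dl_refl.
  - move=> a b c [h1 k1] [h2 k2]; split; [exact: al_trans h1 h2|].
    move=> e he. apply DD_trans with (e, b); auto. apply k2. exact: al_trans he h1.
  - move=> a b [h1 k1]; split; [exact: al_sym|].
    move=> c hc. apply DD_sym, k1. exact: al_trans hc (al_sym h1).
  - move=> f a b Hab.
    have hh : forall i, al (a i) (b i) by move=> i; case: (Hab i).
    apply (kap_of (e := op A f a)).
    have H := (proj2 HDl) f (fun i => mk (al_refl (a i))) (fun i => mk (hh i)).
    apply DD_intro in H; [exact H|].
    move=> i; apply DD_all. case: (Hab i) => _ k; apply k, al_refl.
Qed.

Lemma kap_centr : centralizes al (@total_rel A) kap.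
Proof.
  move=> t P u v w z Hu _ [hal hk].
  pose V1 := fun n => if P n then mk (Hu n) else diag_elt Hal (w n).
  pose V2 := fun n => if P n then mk (Hu n) else diag_elt Hal (z n).
  have H : Dl (eval V1 t) (eval V2 t).
  { apply eval_cong; [apply HDl|]. move=> n; rewrite /V1 /V2; case: (P n).
    - apply Dl_refl.
    - apply Dl_diag. }
  apply DD_intro in H. rewrite !eval_sub in H.
  have E1 : (fun n => (proj1_sig (V1 n)).1) = mix P u w.
  { apply functional_extensionality => n; rewrite /V1 /mix; by case: (P n). }
  have E2 : (fun n => (proj1_sig (V1 n)).2) = mix P v w.
  { apply functional_extensionality => n; rewrite /V1 /mix; by case: (P n). }
  have E3 : (fun n => (proj1_sig (V2 n)).1) = mix P u z.
  { apply functional_extensionality => n; rewrite /V2 /mix; by case: (P n). }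
  have E4 : (fun n => (proj1_sig (V2 n)).2) = mix P v z.
  { apply functional_extensionality => n; rewrite /V2 /mix; by case: (P n). }
  rewrite E1 E2 E3 E4 in H.
  have Hsw : DD (eval (mix P u z) t, eval (mix P v z) t) (eval (mix P u w) t, eval (mix P v z) t).
  { apply DD_sym, DD_swap, hk. apply al_trans with (eval (mix P u z) t).
    - apply al_sym, (DD_al2 H).
    - apply al_sym, hal. }
  apply (kap_of (e := eval (mix P u w) t)).
  exact: DD_trans H Hsw.
Qed.

Lemma th_kap : rel_sub th kap.
Proof. apply comm_least; [apply kap_cong|apply kap_centr]. Qed.

Lemma th_al x y : th x y -> al x y.
Proof. by move=> /th_kap []. Qed.


Definition tm (f : sym S) : term S :=
  dsub d (@App S f (fun i : 'I_(ar f) => dsub d (Var S (4 * i)) (Var S (4 * i + 2)) (Var S (4 * i + 1))))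
         (@App S f (fun i : 'I_(ar f) => Var S (4 * i + 1))) (Var S 3).

Lemma eval_tm f (v : nat -> A) (a b c : 'I_(ar f) -> A) e :
  (forall i : 'I_(ar f), v (4 * i) = a i) -> (forall i : 'I_(ar f), v (4 * i + 2) = b i) ->
  (forall i : 'I_(ar f), v (4 * i + 1) = c i) -> v 3 = e ->
  eval v (tm f) = app3 d (op A f (fun i => app3 d (a i) (b i) (c i))) (op A f c) e.
Proof.
  move=> ha hb hc he. rewrite /tm eval_dsub /= he. f_equal; f_equal; apply functional_extensionality => i.
  - by rewrite eval_dsub /= ha hb hc.
  - by rewrite hc.
Qed.

Lemma ar4 (i : nat) : [/\ (4 * i) %/ 4 = i, (4 * i + 2) %/ 4 = i, (4 * i + 1) %/ 4 = i,
  (4 * i) %% 4 == 0 & (4 * i + 2) %% 4 == 0 = false].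
Proof. split; [lia|lia|lia|apply/eqP; lia|apply/eqP; lia]. Qed.

Lemma odd4 (i : nat) : [/\ odd (4 * i) = false, odd (4 * i + 2) = false, odd (4 * i + 1) = true
  & (4 * i + 1 == 3) = false].
Proof. split; [by rewrite oddM|by rewrite oddD oddM|by rewrite oddD oddM|apply/eqP; lia]. Qed.

Definition rho (P Q : C) : Prop := forall zz,
  th (app3 d (proj1_sig P).2 (proj1_sig P).1 zz) (app3 d (proj1_sig Q).2 (proj1_sig Q).1 zz).

Lemma rho_cong : is_cong rho.
Proof.
  split; [split|].
  - move=> P zz; apply th_refl.
  - move=> P Q R h1 h2 zz; exact: th_trans (h1 zz) (h2 zz).
  - move=> P Q h1 zz; exact: th_sym (h1 zz).
  - move=> f ps qs Hr zz. rewrite /=.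
    set x := fun i => (proj1_sig (ps i)).1.
    set y := fun i => (proj1_sig (ps i)).2.
    set x' := fun i => (proj1_sig (qs i)).1.
    set y' := fun i => (proj1_sig (qs i)).2.
    have hxy : forall i, al (x i) (y i) by move=> i; exact: (proj2_sig (ps i)).
    have hxy' : forall i, al (x' i) (y' i) by move=> i; exact: (proj2_sig (qs i)).
    have hy' : forall i, th (y' i) (app3 d (y i) (x i) (x' i)).
    { move=> i. apply th_sym. apply th_trans with (app3 d (y' i) (x' i) (x' i)).
      - exact: (Hr i (x' i)).
      - apply dxyy_th, al_sym, hxy'. }
    have L1 : th (app3 d (op A f y) (op A f x) zz)
                 (app3 d (op A f (fun i => app3 d (y i) (x i) (x i))) (op A f x) zz).
    { apply app3_cong; [exact Hth| |apply th_refl|apply th_refl].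
      apply (proj2 Hth) => i. apply th_sym, dxyy_th, al_sym, hxy. }
    have L2 : th (app3 d (op A f (fun i => app3 d (y i) (x i) (x' i))) (op A f x') zz)
                 (app3 d (op A f y') (op A f x') zz).
    { apply app3_cong; [exact Hth| |apply th_refl|apply th_refl].
      apply (proj2 Hth) => i. apply th_sym, hy'. }
    pose P := fun n : nat => ~~ odd n.
    pose U := fun n => ext x zz (n %/ 4).
    pose V := fun n => if n %% 4 == 0 then ext y zz (n %/ 4) else ext x zz (n %/ 4).
    pose W := fun n => if n == 3 then zz else ext x zz (n %/ 4).
    pose Z := fun n => if n == 3 then zz else ext x' zz (n %/ 4).
    have hUV : forall n, al (U n) (V n).
    { move=> n; rewrite /U /V /ext. case: (n %% 4 == 0); case: (insub _) => [i|];
      by [apply hxy|apply al_refl]. }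
    have TC := thC (t:=tm f) (P:=P) (u:=U) (v:=V) (w:=W) (z:=Z) hUV (fun _ => I).
    have e1 : eval (mix P U W) (tm f) = zz.
    { rewrite (eval_tm (a := x) (b := x) (c := x) (e := zz)).
      - have -> : (fun i => app3 d (x i) (x i) (x i)) = x
          by apply functional_extensionality => i; apply (dxxy HA).
        apply (dxxy HA).
      - move=> i; case: (ar4 i) => a1 a2 a3 a4 a5; case: (odd4 i) => o1 o2 o3 o4.
        by rewrite /mix /P o1 /U a1 ext_val.
      - move=> i; case: (ar4 i) => a1 a2 a3 a4 a5; case: (odd4 i) => o1 o2 o3 o4.
        by rewrite /mix /P o2 /U a2 ext_val.
      - move=> i; case: (ar4 i) => a1 a2 a3 a4 a5; case: (odd4 i) => o1 o2 o3 o4.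
        by rewrite /mix /P o3 /W o4 a3 ext_val.
      - by []. }
    have e2 : eval (mix P U Z) (tm f) = zz.
    { rewrite (eval_tm (a := x) (b := x) (c := x') (e := zz)).
      - have -> : (fun i => app3 d (x i) (x i) (x' i)) = x'
          by apply functional_extensionality => i; apply (dxxy HA).
        apply (dxxy HA).
      - move=> i; case: (ar4 i) => a1 a2 a3 a4 a5; case: (odd4 i) => o1 o2 o3 o4.
        by rewrite /mix /P o1 /U a1 ext_val.
      - move=> i; case: (ar4 i) => a1 a2 a3 a4 a5; case: (odd4 i) => o1 o2 o3 o4.
        by rewrite /mix /P o2 /U a2 ext_val.
      - move=> i; case: (ar4 i) => a1 a2 a3 a4 a5; case: (odd4 i) => o1 o2 o3 o4.
        by rewrite /mix /P o3 /Z o4 a3 ext_val.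
      - by []. }
    have e3 : eval (mix P V W) (tm f) =
      app3 d (op A f (fun i => app3 d (y i) (x i) (x i))) (op A f x) zz.
    { apply eval_tm.
      - move=> i; case: (ar4 i) => a1 a2 a3 a4 a5; case: (odd4 i) => o1 o2 o3 o4.
        by rewrite /mix /P o1 /V a4 a1 ext_val.
      - move=> i; case: (ar4 i) => a1 a2 a3 a4 a5; case: (odd4 i) => o1 o2 o3 o4.
        by rewrite /mix /P o2 /V a5 a2 ext_val.
      - move=> i; case: (ar4 i) => a1 a2 a3 a4 a5; case: (odd4 i) => o1 o2 o3 o4.
        by rewrite /mix /P o3 /W o4 a3 ext_val.
      - by []. }
    have e4 : eval (mix P V Z) (tm f) =
      app3 d (op A f (fun i => app3 d (y i) (x i) (x' i))) (op A f x') zz.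
    { apply eval_tm.
      - move=> i; case: (ar4 i) => a1 a2 a3 a4 a5; case: (odd4 i) => o1 o2 o3 o4.
        by rewrite /mix /P o1 /V a4 a1 ext_val.
      - move=> i; case: (ar4 i) => a1 a2 a3 a4 a5; case: (odd4 i) => o1 o2 o3 o4.
        by rewrite /mix /P o2 /V a5 a2 ext_val.
      - move=> i; case: (ar4 i) => a1 a2 a3 a4 a5; case: (odd4 i) => o1 o2 o3 o4.
        by rewrite /mix /P o3 /Z o4 a3 ext_val.
      - by []. }
    have K : th (eval (mix P V W) (tm f)) (eval (mix P V Z) (tm f)).
    { apply TC. rewrite e1 e2; apply th_refl. }
    rewrite e3 e4 in K.
    exact: th_trans L1 (th_trans K L2).
Qed.

Lemma Dl_rho : rel_sub Dl rho.
Proof.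
  move=> P Q H. apply H; [exact rho_cong|].
  move=> P' Q' [u [v [_ [e1 e2]]]] zz. rewrite e1 e2 /= !(dxxy HA). apply th_refl.
Qed.

Lemma th_of_DD c a b : DD (c, a) (c, b) -> th a b.
Proof.
  move=> [hp [hq H]]. have := Dl_rho H c => /= K.
  apply th_trans with (app3 d a c c); [apply th_sym, dxyy_th, al_sym, hp|].
  apply th_trans with (app3 d b c c); [exact K|apply dxyy_th, al_sym, hq].
Qed.

Lemma repr_cls_al a : al (Defs.repr (cls al a)) a.
Proof. apply repr_cls, Hal. Qed.

Definition phi1 (a : A) : Balg Hal := cls Dl (mk (repr_cls_al a)).

Lemma phi_resp a a' : th a a' -> phi1 a = phi1 a' /\ cls al a = cls al a'.
Proof.
  move=> h. have hc : cls al a = cls al a' by apply cls_eq; [apply Hal|apply th_al].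
  split; [|exact hc].
  apply cls_eq; [apply HDl|]. apply DD_all. rewrite -hc.
  case: (th_kap h) => _ k; apply k, repr_cls_al.
Qed.

Lemma plusB_cls (P Q : C) x y z (h3 : al x z) :
  proj1_sig P = (y, z) -> proj1_sig Q = (x, y) ->
  plusB d (H:=Hal) (cls Dl P) (cls Dl Q) = cls Dl (mk h3).
Proof.
  move=> eP eQ. rewrite /plusB /zeroB. move: (proj1_sig (Defs.repr _)).1 => w.
  rewrite app3_quot; [|exact HDl]. apply cls_eq; [apply HDl|].
  apply Dl_trans with (app3 d P (diag_elt Hal y) Q).
  { apply app3_cong; [exact HDl|apply Dl_refl|apply Dl_diag|apply Dl_refl]. }
  set R := app3 d P (diag_elt Hal y) Q.
  have eR : proj1_sig R = (x, app3 d z y y).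
  { rewrite /R app3_sub eP eQ /= (dxxy HA) //. }
  have hyz : al y z.
  { have := proj2_sig P; rewrite eP //. }
  have k : kap (app3 d z y y) z by apply th_kap, dxyy_th, al_sym.
  have H : DD (x, app3 d z y y) (x, z).
  { case: k => hk k; apply k. exact: al_trans h3 (al_sym hk). }
  move: R eR => [r hr] /= er. subst r. by apply DD_all.
Qed.

Lemma sur x y c (h : al x y) : DD (c, app3 d y x c) (x, y).
Proof.
  have H1 : Dl (app3 d (mk h) (diag_elt Hal x) (diag_elt Hal c))
               (app3 d (mk h) (diag_elt Hal x) (diag_elt Hal x)).
  { apply app3_cong; [exact HDl|apply Dl_refl|apply Dl_refl|apply Dl_diag]. }
  apply DD_intro in H1. rewrite !app3_sub /= !(dxxy HA) in H1.
  apply DD_trans with (x, app3 d y x x); [exact H1|].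
  have k : kap (app3 d y x x) y by apply th_kap, dxyy_th, al_sym.
  case: k => hk k; apply k. exact: al_trans h (al_sym hk).
Qed.

Lemma main : exists T : forall f : sym S, ('I_(ar f) -> quot al) -> Balg Hal,
    isomorphic (quot th) (otimes (plusB d (H:=Hal)) T).
Proof.
  exists (fun f q => cls Dl (mk (repr_cls_al (op A f (fun i => Defs.repr (q i)))))).
  pose h := fun X : quot th => (phi1 (Defs.repr X), cls al (Defs.repr X)).
  have Qop : forall f (a : 'I_(ar f) -> A),
      op (quot al) f (fun i => cls al (a i)) = cls al (op A f a).
  { move=> f a. rewrite /= /quot_op. apply cls_eq; [apply Hal|].
    apply (proj2 Hal) => i; apply repr_cls_al. }
  exists h. split.
  - move=> f xs. rewrite /h /=. set a := fun i => Defs.repr (xs i).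
    have Hr : th (Defs.repr (cls th (op A f a))) (op A f a) by apply repr_cls, Hth.
    case: (phi_resp Hr) => -> ->.
    rewrite /otimes_op. f_equal; last by symmetry; exact (Qop f a).
    change (phi1 (op A f a) = plusB d (H:=Hal) (op (Balg Hal) f (fun i => phi1 (a i)))
       (cls Dl (mk (repr_cls_al (op A f (fun i => Defs.repr (cls al (a i)))))))).
    have EB : op (Balg Hal) f (fun i => phi1 (a i)) =
              cls Dl (op C f (fun i => mk (repr_cls_al (a i)))).
    { rewrite /= /quot_op. apply cls_eq; [apply HDl|]. apply (proj2 HDl) => i.
      apply repr_cls, HDl. }
    rewrite EB.
    have h3 : al (Defs.repr (op (quot al) f (fun i => cls al (a i)))) (op A f a).
    { apply al_trans with (op A f (fun i => Defs.repr (cls al (a i)))); [apply repr_cls_al|].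
      apply (proj2 Hal) => i; apply repr_cls_al. }
    rewrite (plusB_cls (x := Defs.repr (op (quot al) f (fun i => cls al (a i))))
                       (y := op A f (fun i => Defs.repr (cls al (a i)))) (z := op A f a) h3) //.
    rewrite /phi1. f_equal. apply sig_ext => /=. f_equal. f_equal. symmetry; exact (Qop f a).
  - pose g := fun bq : (Balg Hal * quot al)%type =>
      cls th (app3 d (proj1_sig (Defs.repr bq.1)).2 (proj1_sig (Defs.repr bq.1)).1 (Defs.repr bq.2)).
    exists g.
    + move=> X. rewrite /g /h /=. set a := Defs.repr X.
      rewrite -(cls_repr X) -/a. apply cls_eq; [apply Hth|].
      set P := Defs.repr (phi1 a).
      have HP : Dl P (mk (repr_cls_al a)) by apply repr_cls, HDl.
      apply DD_intro in HP.
      move: HP; case: (proj1_sig P) => x y /= HP.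
      apply (th_of_DD (c := Defs.repr (cls al a))).
      apply DD_trans with (x, y); [apply sur, (DD_al1 HP)|exact HP].
    + move=> [b q]. rewrite /g /h /=.
      set P := Defs.repr b. set c := Defs.repr q.
      move: (erefl (proj1_sig P)). case: {2}(proj1_sig P) => x y eP. rewrite eP /=.
      have hxy : al x y by have := proj2_sig P; rewrite eP.
      set a := app3 d y x c.
      have Hr : th (Defs.repr (cls th a)) a by apply repr_cls, Hth.
      case: (phi_resp Hr) => -> ->.
      have ca : cls al a = q.
      { rewrite -(cls_repr q) -/c. apply cls_eq; [apply Hal|].
        rewrite /a -{2}(dxxy HA x c). apply app3_cong; [exact Hal|apply al_sym, hxy|apply al_refl|apply al_refl]. }
      rewrite ca. f_equal.
      rewrite /phi1 -(cls_repr b) -/P. apply cls_eq; [apply HDl|].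
      move: (repr_cls_al a). rewrite ca -/c => hh.
      move: P eP => [p hp] /= eP; subst p. apply DD_all. by apply sur.
Qed.
End Main.

Theorem theorem2p6 (S : signature) (E : term S -> term S -> Prop) (d : term S)
  (HCM : congruence_modular E) (Hd : is_difference_term E d)
  (A : algebra S) (HA : satisfies A E)
  (al : A -> A -> Prop) (Hal : is_cong al) :
  exists T : forall f : sym S, ('I_(ar f) -> quot al) -> Balg Hal,
    isomorphic (quot (commutator al (@total_rel A)))
               (otimes (plusB d (H:=Hal)) T).
Proof. exact (main HCM Hd HA Hal). Qed.
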